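(* Let $m,k\ge1$, $\mathbf T\in M(m,k)$ and $\sigma$ a permutation of $\mathrm{Range}(\mathbf T)$ such that the $(\mathbf T,\sigma)$-graph is connected. Let $a(\sigma)$ be the number of $q\in\mathrm{Range}(\mathbf T)$ with $\sigma(q)\ne q$. Then \[ km-|\mathbf T|+a(\sigma)\ge m-1+\mathbf 1[\sigma\ne \mathrm{id}]. \]
   Context: $[p]=\{1,\dots,p\}$. $M(m,k)$ is the set of tuples $\mathbf T=(T_1,\dots,T_m)$ with each $T_i=(T_{i,1},\dots,T_{i,k})\in[km]^k$ having pairwise distinct entries; $\mathrm{Range}(\mathbf T)=\{T_{i,j}\}$ and $|\mathbf T|=|\mathrm{Range}(\mathbf T)|$. For a permutation $\sigma$ of $\mathrm{Range}(\mathbf T)$, the $(\mathbf T,\sigma)$-graph has vertex set $\{(i,j):i\in[m],j\in[k]\}$, with a black edge between $(i,j)$ and $(i,j+1)$ ($j\le k-1$), a solid red edge between distinct $(i,j),(i',j')$ with $T_{i,j}=T_{i',j'}$, and a dotted red edge between $(i,j),(i',j')$ with $T_{i,j}\neq T_{i',j'}$ and $\sigma(T_{i,j})=T_{i',j'}$ or $\sigma(T_{i',j'})=T_{i,j}$. *)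

(* Defs.v *)
From mathcomp Require Import all_boot all_order all_fingroup.
Set Implicit Arguments. Unset Strict Implicit. Unset Printing Implicit Defensive.

(* [p] = {1..p} is modelled by 'I_p = {0..p-1} (shift by one).
   A tuple T = (T_1..T_m) with T_i in [km]^k is a function
   T : 'I_m -> 'I_k -> 'I_(k*m); T_{i,j} = T i j. *)

Definition in_M (m k : nat) (T : 'I_m -> 'I_k -> 'I_(k * m)) : Prop :=
  forall i : 'I_m, injective (T i).

Definition Range (m k : nat) (T : 'I_m -> 'I_k -> 'I_(k * m)) : {set 'I_(k * m)} :=
  [set T ij.1 ij.2 | ij : 'I_m * 'I_k].

(* Edges of the (T,sigma)-graph on vertices (i,j).
   A permutation sigma of Range(T) is represented by a permutation of 'I_(km)
   supported on Range(T) (perm_on (Range T) sigma). *)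
Definition black_edge (m k : nat) (u v : 'I_m * 'I_k) : bool :=
  (u.1 == v.1) && ((u.2.+1 == v.2 :> nat) || (v.2.+1 == u.2 :> nat)).

Definition solid_red_edge (m k : nat) (T : 'I_m -> 'I_k -> 'I_(k * m))
  (u v : 'I_m * 'I_k) : bool :=
  (u != v) && (T u.1 u.2 == T v.1 v.2).

Definition dotted_red_edge (m k : nat) (T : 'I_m -> 'I_k -> 'I_(k * m))
  (sigma : {perm 'I_(k * m)}) (u v : 'I_m * 'I_k) : bool :=
  (T u.1 u.2 != T v.1 v.2) &&
  ((sigma (T u.1 u.2) == T v.1 v.2) || (sigma (T v.1 v.2) == T u.1 u.2)).

Definition graph_edge (m k : nat) (T : 'I_m -> 'I_k -> 'I_(k * m))
  (sigma : {perm 'I_(k * m)}) : rel ('I_m * 'I_k) :=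
  fun u v => [|| black_edge u v, solid_red_edge T u v | dotted_red_edge T sigma u v].

Definition graph_connected (m k : nat) (T : 'I_m -> 'I_k -> 'I_(k * m))
  (sigma : {perm 'I_(k * m)}) : Prop :=
  forall u v : 'I_m * 'I_k, connect (graph_edge T sigma) u v.

Definition a_sigma (m k : nat) (T : 'I_m -> 'I_k -> 'I_(k * m))
  (sigma : {perm 'I_(k * m)}) : nat :=
  #|[set q in Range T | sigma q != q]|.

(* Main.v *)
Require Import Defs.
From mathcomp Require Import all_boot all_order all_fingroup.
From mathcomp Require Import zify.
Set Implicit Arguments. Unset Strict Implicit. Unset Printing Implicit Defensive.
Section Core.
Variable V : finType.
Definition Erel (es : seq (V * V)) : rel V :=
  fun u v => ((u, v) \in es) || ((v, u) \in es).

Lemma Erel_sym es : symmetric (Erel es).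
Proof. by move=> u v; rewrite /Erel orbC. Qed.

Lemma ce_sym es x y : connect (Erel es) x y = connect (Erel es) y x.
Proof. by exact: (sym_connect_sym (@Erel_sym es)). Qed.

Lemma connect_cons a b es x y : connect (Erel ((a, b) :: es)) x y ->
  connect (Erel es) x y ||
  ((connect (Erel es) x a || connect (Erel es) x b) &&
   (connect (Erel es) y a || connect (Erel es) y b)).
Proof.
move/connectP=> [p Hp ->] {y}.
elim: p x Hp => [|z p IH] x /=; first by rewrite connect0.
move=> /andP[Hxz /IH {IH}].
set y := last z p.
have Ht := @connect_trans _ (Erel es).
move: Hxz; rewrite [Erel _ x z]/Erel !in_cons !xpair_eqE.
case/orP => [/orP[/andP[/eqP-> /eqP->]|Hold]|/orP[/andP[/eqP-> /eqP->]|Hold]].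
- case/orP=> [Hzy|/andP[_ ->]]; last by rewrite connect0 /= orbT.
  rewrite connect0 /=; apply/orP; right; apply/orP; right; by rewrite ce_sym.
- have Hxz : connect (Erel es) x z by apply: connect1; rewrite /Erel Hold.
  case/orP=> [Hzy|/andP[Hz ->]]; first by rewrite (Ht _ _ _ Hxz Hzy).
  case/orP: Hz => Hz; by rewrite (Ht _ _ _ Hxz Hz) /= ?orbT.
- case/orP=> [Hzy|/andP[_ ->]]; last by rewrite !connect0 /= !orbT.
  have -> : connect (Erel es) y a by rewrite ce_sym.
  by rewrite !connect0 /= !orbT.
- have Hxz : connect (Erel es) x z by apply: connect1; rewrite /Erel Hold orbT.
  case/orP=> [Hzy|/andP[Hz ->]]; first by rewrite (Ht _ _ _ Hxz Hzy).
  case/orP: Hz => Hz; by rewrite (Ht _ _ _ Hxz Hz) /= ?orbT.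
Qed.

Lemma core es : exists S : {set V}, #|V| <= #|S| + size es /\
  {in S &, forall x y, connect (Erel es) x y -> x = y}.
Proof.
elim: es => [|[a b] es [S [HS HSc]]].
  exists setT; rewrite cardsT addn0; split=> // x y _ _.
  by move/connectP=> [[|z p]] /=; [move=> _ -> | ].
pose B := [set s | connect (Erel es) s a].
exists (S :\: B); split.
  have H1 : #|S :&: B| <= 1.
    apply/card_le1_eqP => x y; rewrite !inE => /andP[Hx Hxa] /andP[Hy Hya].
    apply: HSc => //; have Hay : connect (Erel es) a y by rewrite ce_sym.
    rewrite ce_sym; exact: connect_trans Hxa Hay.
  move: HS; rewrite -(cardsID B S) /=. lia.
move=> x y; rewrite !inE => /andP[Hxa Hx] /andP[Hya Hy] /connect_cons.
case/orP => [|/andP[]]; first exact: HSc.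
rewrite (negbTE Hxa) (negbTE Hya) /= => Hxb Hyb.
apply: HSc => //; have Hby : connect (Erel es) b y by rewrite ce_sym.
first [exact: connect_trans Hxb Hby | rewrite ce_sym; exact: connect_trans Hxb Hby].
Qed.

Lemma conn_bound es (A : {set V}) :
  {in A &, forall x y, connect (Erel es) x y} ->
  #|V| <= 1 + #|~: A| + size es.
Proof.
move=> HA; have [S [HS HSc]] := core es.
have H1 : #|S :&: A| <= 1.
  apply/card_le1_eqP => x y; rewrite !inE => /andP[Hx Hxa] /andP[Hy Hya].
  by apply: HSc => //; apply: HA.
have H2 : #|S :\: A| <= #|~: A|.
  by apply: subset_leq_card; apply/subsetP=> x; rewrite !inE => /andP[].
have := cardsID A S. lia.
Qed.
End Core.
Section Main.
Variables (m k : nat) (T : 'I_m -> 'I_k -> 'I_(k * m)) (sigma : {perm 'I_(k * m)}).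
Notation V := ('I_m + 'I_(k * m))%type.
Definition RE : seq (V * V) :=
  [seq (inl ij.1, inr (T ij.1 ij.2)) | ij <- enum [set: 'I_m * 'I_k]].
Definition SE (P : {set 'I_(k * m)}) : seq (V * V) :=
  [seq (inr q, inr (sigma q)) | q <- enum P].

Lemma rowE (es : seq (V * V)) (u : 'I_m * 'I_k) : {subset RE <= es} ->
  connect (Erel es) (inl u.1) (inr (T u.1 u.2)).
Proof.
move=> Hs; apply: connect1; rewrite /Erel; apply/orP; left; apply: Hs.
by apply/mapP; exists u; rewrite ?mem_enum ?inE.
Qed.

Lemma transfer (es : seq (V * V)) : {subset RE <= es} ->
  (forall q, sigma q != q -> connect (Erel es) (inr q) (inr (sigma q))) ->
  forall u v, connect (graph_edge T sigma) u v -> connect (Erel es) (inl u.1) (inl v.1).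
Proof.
move=> Hs Hd.
have Hrev x y : connect (Erel es) x y -> connect (Erel es) y x by rewrite ce_sym.
have edge u v : graph_edge T sigma u v -> connect (Erel es) (inl u.1) (inl v.1).
  case/or3P.
  - by case/andP=> /eqP->.
  - case/andP=> _ /eqP He.
    apply: connect_trans (rowE u Hs) _; rewrite He; exact: Hrev (rowE v Hs).
  - case/andP=> Hne /orP[/eqP He|/eqP He].
      apply: connect_trans (rowE u Hs) _; apply: connect_trans (Hrev _ _ (rowE v Hs)).
      rewrite -He; apply: Hd; by rewrite He eq_sym.
    apply: connect_trans (rowE u Hs) _; apply: connect_trans (Hrev _ _ (rowE v Hs)).
    rewrite -He; apply: Hrev; apply: Hd; by rewrite He.
move=> u v /connectP [p Hp ->] {v}.
elim: p u Hp => [|w p IH] u /=; first by rewrite connect0.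
case/andP=> Hw /IH; exact: connect_trans (edge _ _ Hw).
Qed.

Lemma final_bound (es : seq (V * V)) : 1 <= m -> 1 <= k -> {subset RE <= es} ->
  (forall q, sigma q != q -> connect (Erel es) (inr q) (inr (sigma q))) ->
  graph_connected T sigma ->
  m + k * m <= 1 + (k * m - #|Range T|) + size es.
Proof.
move=> Hm Hk Hs Hd Hc.
pose r0 : 'I_m := Ordinal Hm. pose j0 : 'I_k := Ordinal Hk.
pose A := [set x : V | if x is inr q then q \in Range T else true].
have HA : forall x, x \in A -> connect (Erel es) x (inl r0).
  move=> [i|q]; rewrite inE => Hx.
    exact: (transfer Hs Hd (Hc (i, j0) (r0, j0))).
  case/imsetP: Hx => ij _ ->.
  have H1 : connect (Erel es) (inr (T ij.1 ij.2)) (inl ij.1) by rewrite ce_sym; exact: rowE.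
  exact: connect_trans H1 (transfer Hs Hd (Hc ij (r0, j0))).
have := @conn_bound _ es A.
have -> : #|{: V}| = m + k * m by rewrite card_sum !card_ord.
have HcA : #|~: A| <= k * m - #|Range T|.
  apply: (@leq_trans #|(inr @: (~: Range T) : {set V})|).
    apply: subset_leq_card; apply/subsetP=> [[i|q]]; rewrite !inE //.
    by move=> Hq; apply/imsetP; exists q; rewrite ?inE.
  by rewrite card_imset; [rewrite cardsCs setCK card_ord | exact: inr_inj].
move=> H; have {}H := H (fun x y Hx Hy => connect_trans (HA x Hx) (etrans (ce_sym _ _ _) (HA y Hy))).
apply: leq_trans H _; by rewrite leq_add2r leq_add2l.
Qed.
End Main.
Lemma arith0 m km r a : m + km <= 1 + (km - r) + km -> m - 1 + 0 <= km - r + a.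
Proof. lia. Qed.
Lemma arith1 m km r a : 1 <= a -> r <= km ->
  m + km <= 1 + (km - r) + (km + (a - 1)) -> m - 1 + 1 <= km - r + a.
Proof. lia. Qed.

Lemma arith2 m km r p : m + km <= 1 + (km - r) + (km + p) -> m - 1 + 1 <= km - r + (1 + p).
Proof. lia. Qed.

Theorem mainTheorem7 (m k : nat) (T : 'I_m -> 'I_k -> 'I_(k * m))
  (sigma : {perm 'I_(k * m)}) :
  1 <= m -> 1 <= k -> in_M T -> perm_on (Range T) sigma ->
  graph_connected T sigma ->
  m - 1 + (sigma != 1%g) <= k * m - #|Range T| + a_sigma T sigma.
Proof.
move=> Hm Hk _ Hon Hc.
have HR : #|Range T| <= k * m by have := max_card (Range T); rewrite card_ord.
have Ha : a_sigma T sigma = #|[set q | sigma q != q]|.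
  rewrite /a_sigma; apply: eq_card => q; rewrite !inE.
  case Hq: (sigma q != q); rewrite ?andbT ?andbF //.
  by apply: (subsetP Hon); rewrite inE.
have HRE : #|[set: 'I_m * 'I_k]| = m * k by rewrite cardsT card_prod !card_ord.
case: (eqVneq sigma 1%g) => [Heq|Hne].
  have := @final_bound m k T sigma (RE T) Hm Hk (fun x Hx => Hx).
  rewrite /= => H.
  have {}H : m + k * m <= 1 + (k * m - #|Range T|) + size (RE T).
    apply: H => // q; by rewrite Heq perm1 eqxx.
  rewrite size_map -cardE HRE in H.
  rewrite [m * k]mulnC in H; exact: arith0 H.
have [q0 Hq0] : exists q0, sigma q0 != q0.
  apply/existsP; move: Hne; apply: contraR; rewrite negb_exists => /forallP Hf.
  apply/eqP/permP => x; rewrite perm1; apply/eqP; by have := Hf x; rewrite negbK.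
pose P := [set q | sigma q != q] :\ q0.
pose es := RE T ++ SE sigma P.
have Hs : {subset RE T <= es} by move=> x Hx; rewrite mem_cat Hx.
have Hedge q : q \in P -> connect (Erel es) (inr q) (inr (sigma q)).
  move=> Hq; apply: connect1; rewrite /Erel; apply/orP; left.
  by rewrite mem_cat; apply/orP; right; apply/mapP; exists q; rewrite ?mem_enum.
have Hcyc : connect (Erel es) (inr (sigma q0)) (inr q0).
  have Hj j : connect (Erel es) (inr (sigma q0)) (inr ((sigma ^+ j.+1)%g q0))
           \/ connect (Erel es) (inr (sigma q0)) (inr q0).
    elim: j => [|j [IH|IH]]; [by left; rewrite expg1 connect0 | | by right].
    case: (eqVneq ((sigma ^+ j.+1)%g q0) q0) => [Ez|Nz]; first by right; rewrite Ez in IH.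
    left; apply: connect_trans IH _.
    have -> : (sigma ^+ j.+2)%g q0 = sigma ((sigma ^+ j.+1)%g q0).
      by rewrite [(sigma ^+ j.+2)%g]expgSr permM.
    apply: Hedge; rewrite !inE Nz /=.
    apply/eqP => E; move/eqP: Hq0; apply; apply: (@perm_inj _ (sigma ^+ j.+1)%g).
    by rewrite -permM -expgS expgSr permM.
  have := Hj (#[sigma]%g).-1; rewrite prednK ?order_gt0 // expg_order perm1.
  by case.
have Hd q : sigma q != q -> connect (Erel es) (inr q) (inr (sigma q)).
  move=> Hq; case: (eqVneq q q0) => [->|Nq].
    by rewrite ce_sym.
  by apply: Hedge; rewrite !inE Nq.
have := @final_bound m k T sigma es Hm Hk Hs Hd Hc.
rewrite size_cat !size_map -!cardE HRE.
have HP : #|[set q | sigma q != q]| = 1 + #|P| by rewrite (cardsD1 q0) inE Hq0.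
rewrite Ha HP [m * k]mulnC => H.
exact: arith2 H.
Qed.
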